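(* Let $n,f$ be positive integers such that $2^{f/2}=O(n)$. Any $f$-FDO with an arbitrary finite stretch for $n$-vertex directed graphs requires $\Omega(2^{f/2}\, n)$ bits of space, regardless of the query time.
   Context: For a directed graph $G=(V,E)$ and $F\subseteq E$, $G-F$ is $G$ with the edges of $F$ removed; $\mathrm{diam}(H)=\max_{s,t} d_H(s,t)$, which is $+\infty$ if $H$ is not strongly connected. An $f$-FDO ($f$-edge fault-tolerant diameter oracle) for $G$ is a data structure built from $G$ that, on query a set $F\subseteq E$ with $|F|\le f$, returns a value $\widehat{D}(F)$; it has stretch $\sigma\ge 1$ if always $\mathrm{diam}(G-F)\le \widehat{D}(F)\le \sigma\cdot \mathrm{diam}(G-F)$. A finite stretch $\sigma$ in particular forces $\widehat D(F)=+\infty$ exactly when $\mathrm{diam}(G-F)=+\infty$. *)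

(* Defs.v *)
From mathcomp Require Import all_boot all_order all_algebra.
Set Implicit Arguments. Unset Strict Implicit. Unset Printing Implicit Defensive.
Import Order.TTheory GRing.Theory Num.Theory.
Local Open Scope ring_scope.

Definition edgeset (n : nat) := {set 'I_n * 'I_n}.

Definition loopless n (E : edgeset n) : Prop := forall x, (x, x) \notin E.

Definition erel n (E : edgeset n) : rel 'I_n := fun x y => (x, y) \in E.

Definition walk_in {T : eqType} (e : rel T) (k : nat) (s t : T) : Prop :=
  exists p : seq T, [/\ path e s p, last s p = t & size p = k].

Definition dist_is {T : eqType} (e : rel T) (s t : T) (d : nat) : Prop :=
  walk_in e d s t /\ forall k, walk_in e k s t -> (d <= k)%N.

Definition strongly_connected {T : eqType} (e : rel T) : Prop :=
  forall s t, exists k, walk_in e k s t.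

Definition diam_is {T : eqType} (e : rel T) (D : nat) : Prop :=
  (exists s t, dist_is e s t D) /\ (forall s t d, dist_is e s t d -> (d <= D)%N).

(* Dhat is a sigma-approximation of diam(H), where None encodes +infinity *)
Definition stretch_ok (R : realFieldType) (sigma : R) {T : eqType} (e : rel T)
    (Dhat : option R) : Prop :=
  (~ strongly_connected e -> Dhat = None) /\
  (strongly_connected e -> exists x, Dhat = Some x /\
     forall D, diam_is e D -> (D%:R <= x) && (x <= sigma * D%:R)).

(* An f-FDO for n-vertex (simple) digraphs: the stored data structure is the
   bit string enc E, queries are answered by an arbitrary function q of the
   stored bits and the fault set F (so query time is irrelevant). *)
Definition is_FDO (R : realFieldType) (n f : nat) (sigma : R)
    (enc : edgeset n -> seq bool) (q : seq bool -> edgeset n -> option R) : Prop :=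
  forall E : edgeset n, loopless E ->
  forall F : edgeset n, F \subset E -> (#|F| <= f)%N ->
    stretch_ok sigma (erel (E :\: F)) (q (enc E) F).

(* Main.v *)
Require Import Defs.
From mathcomp Require Import all_boot all_order all_algebra.
From mathcomp Require Import zify ring lra.
Import Order.TTheory GRing.Theory Num.Theory.

Set Implicit Arguments. Unset Strict Implicit. Unset Printing Implicit Defensive.


Section Tree.
Variable k : nat.
Definition anc (x y : nat) : bool := [exists j : 'I_k.+1, y == x %/ 2^j].
Definition sib a := if a %% 2 == 0 then a.+1 else a.-1.
Definition leaf x := (2^k <= x) && (x < 2^k.+1).

Lemma div_succ x j : x %/ 2^j.+1 = x %/ 2^j %/ 2.
Proof. by rewrite expnSr divnMA. Qed.

Lemma anc_refl x : anc x x.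
Proof. apply/existsP; exists ord0; by rewrite expn0 divn1. Qed.

Lemma expk_pos j : 0 < 2^j. Proof. by rewrite expn_gt0. Qed.

Lemma anc_root x : leaf x -> anc x 1.
Proof.
case/andP=> h1 h2; apply/existsP; exists ord_max => /=.
rewrite eqn_leq leq_divRL ?expk_pos // mul1n h1 /=.
rewrite -ltnS ltn_divLR ?expk_pos //. by rewrite -expnS.
Qed.

Lemma root_div x : leaf x -> x %/ 2^k = 1.
Proof. case/andP=> h1 h2; apply/eqP;
  by rewrite eqn_leq -ltnS ltn_divLR ?expk_pos // -expnS h2 /= leq_divRL ?expk_pos // mul1n h1. Qed.

Lemma leaf_LL : leaf (2^k).
Proof. by rewrite /leaf leqnn expnS mul2n -addnn -addn1 leq_add2l expn_gt0. Qed.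

Lemma path_node x j : leaf x -> j <= k -> 0 < x %/ 2^j < 2^k.+1.
Proof.
case/andP=> h1 h2 hj; apply/andP; split.
  rewrite leq_divRL ?expk_pos // mul1n; apply: leq_trans h1; by rewrite leq_exp2l.
apply: leq_ltn_trans h2; exact: leq_div.
Qed.

Lemma anc_leaf x y : leaf x -> anc x y -> 2^k <= y -> y = x.
Proof.
move=> hx /existsP [j /eqP ->] hy.
case: j hy => [[|j] hj] /= hy; first by rewrite expn0 divn1.
exfalso; move: hy; apply/negP; rewrite -ltnNge.
case/andP: hx => _ h2.
apply: (@leq_ltn_trans (x %/ 2)).
  rewrite div_succ; apply: leq_div2r; exact: leq_div.
by rewrite ltn_divLR // -expnSr.
Qed.

Lemma tree_fault x c : leaf x -> 0 < c < 2^k.+1 -> anc x (c %/ 2) -> ~~ anc x c ->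
  exists2 i, i < k & c = sib (x %/ 2^i).
Proof.
move=> hx /andP [c0 c1] /existsP [j /eqP hj] hn.
case: j hj => [[|i] hi] /= hj.
  exfalso; move: hj; rewrite expn0 divn1 => hj.
  case/andP: hx => h1 _.
  have : 2^k <= c %/ 2 by rewrite hj.
  rewrite leq_divRL // -expnSr leqNgt c1 //.
exists i => //.
have hne : c <> x %/ 2^i.
  move=> e; move/negP: hn; apply; apply/existsP.
  have hi' : i < k.+1 by apply: ltnW.
  exists (Ordinal hi'); by rewrite e.
move: hj; rewrite div_succ => hj.
rewrite /sib; set a := x %/ 2^i in hj hne *.
case: ifP => /eqP h3; lia.
Qed.
End Tree.

Section Graph.
Variables (m k B : nat).
Hypothesis hBP : B * 2^k.+2 <= m.

Definition HH := 2^k.+1.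
Definition PP := 2^k.+2.
Definition LL := 2^k.
Lemma PPE : PP = 2 * HH. Proof. by rewrite /PP /HH expnS. Qed.
Lemma HHE : HH = 2 * LL. Proof. by rewrite /LL /HH expnS. Qed.
Lemma LL_pos : 0 < LL. Proof. by rewrite expn_gt0. Qed.

Definition blk u := u.-1 %/ PP.
Definition loc u := u.-1 %% PP.
Definition t2 u := loc u - HH.
Definition isT1 u := [&& 0 < u, blk u < B, 0 < loc u & loc u < HH].
Definition isT2 u := [&& 0 < u, blk u < B & HH < loc u].
Definition extra u := [&& 0 < u, ~~ isT1 u & ~~ isT2 u].
Definition v1 b t := (b * PP + t).+1.
Definition v2 b t := (b * PP + HH + t).+1.

Lemma PP_pos : 0 < PP. Proof. by rewrite PPE HHE; have := LL_pos; lia. Qed.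

Lemma v1_blk b t : t < PP -> blk (v1 b t) = b.
Proof. move=> h; by rewrite /blk /v1 /= divnMDl ?PP_pos // divn_small // addn0. Qed.
Lemma v1_loc b t : t < PP -> loc (v1 b t) = t.
Proof. move=> h; by rewrite /loc /v1 /= modnMDl modn_small. Qed.
Lemma v2_blk b t : t < HH -> blk (v2 b t) = b.
Proof. move=> h; rewrite /blk /v2 /= -addnA divnMDl ?PP_pos // divn_small ?addn0 //.
  rewrite PPE; lia. Qed.
Lemma v2_loc b t : t < HH -> loc (v2 b t) = HH + t.
Proof. move=> h; rewrite /loc /v2 /= -addnA modnMDl modn_small //. rewrite PPE; lia. Qed.
Lemma v2_t2 b t : t < HH -> t2 (v2 b t) = t.
Proof. move=> h; rewrite /t2 v2_loc //; lia. Qed.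

Lemma isT1_v1 b t : b < B -> 0 < t < HH -> isT1 (v1 b t).
Proof.
move=> hb /andP[h1 h2]; have ht : t < PP by rewrite PPE; lia.
by rewrite /isT1 v1_blk // v1_loc // hb h1 h2.
Qed.
Lemma isT2_v2 b t : b < B -> 0 < t < HH -> isT2 (v2 b t).
Proof.
move=> hb /andP[h1 h2]; rewrite /isT2 v2_blk // v2_loc // hb /=; lia.
Qed.

Lemma loc_lt u : loc u < PP. Proof. by rewrite /loc ltn_mod PP_pos. Qed.

Lemma decode u : 0 < u -> u = (blk u * PP + loc u).+1.
Proof. move=> h; rewrite /blk /loc -divn_eq; lia. Qed.

Lemma isT1_E u : isT1 u -> u = v1 (blk u) (loc u).
Proof. case/and4P=> h _ _ _; exact: decode. Qed.
Lemma isT2_E u : isT2 u -> u = v2 (blk u) (t2 u).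
Proof. case/and3P=> h _ h2; rewrite /v2 /t2 {1}(decode h); lia. Qed.

Lemma t2_range u : isT2 u -> 0 < t2 u < HH.
Proof. case/and3P=> _ _ h; have := loc_lt u; rewrite /t2 PPE; lia. Qed.

Lemma T12 u : isT1 u -> isT2 u -> False.
Proof. case/and4P=> _ _ _ h1; case/and3P=> _ _ h2; lia. Qed.

Lemma blk_bound b t : b < B -> t <= PP -> b * PP + t <= m.
Proof.
move=> hb ht; apply: leq_trans hBP; rewrite -/PP.
apply: (@leq_trans (b * PP + PP)); first by rewrite leq_add2l.
by rewrite -mulSnr leq_mul2r hb orbT.
Qed.

Lemma v1_le b t : b < B -> t < PP -> v1 b t <= m.
Proof. move=> hb ht; rewrite /v1 -addnS; exact: blk_bound. Qed.
Lemma v2_le b t : b < B -> t < HH -> v2 b t <= m.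
Proof. move=> hb ht; rewrite /v2 -addnA -addnS; apply: blk_bound => //. rewrite PPE; lia. Qed.


Definition base u w := [|| (u != 0) && (w == 0),
  (u == 0) && extra w,
  [&& u == 0, isT1 w & loc w == 1],
  [&& u == 0, isT2 w & LL <= t2 w],
  [&& isT1 u, isT1 w, blk u == blk w & loc w %/ 2 == loc u],
  [&& isT2 u, isT2 w, blk u == blk w & t2 u %/ 2 == t2 w] |
  [&& isT2 u, t2 u == 1, isT1 w || isT2 w, blk w == blk u & u != w]].

Definition idx3 b l v := b * (LL * LL) + (l - LL) * LL + (v - LL).
Definition ess (S : pred nat) u w :=
  [&& isT1 u, LL <= loc u, isT2 w, LL <= t2 w, blk u == blk w &
      S (idx3 (blk u) (loc u) (t2 w))].

Definition fault b l v u w := [|| (u == 0) && (w == v2 b v),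
  [&& isT1 u, isT1 w, blk u == b, blk w == b, loc w %/ 2 == loc u,
      anc k l (loc u) & ~~ anc k l (loc w)] |
  [&& isT2 u, isT2 w, blk u == b, blk w == b, t2 u %/ 2 == t2 w,
      anc k v (t2 w) & ~~ anc k v (t2 u)]].

Definition E (S : pred nat) : edgeset m.+1 :=
  [set x : 'I_m.+1 * 'I_m.+1 | base x.1 x.2 || ess S x.1 x.2].
Definition F b l v : edgeset m.+1 := [set x : 'I_m.+1 * 'I_m.+1 | fault b l v x.1 x.2].

Lemma base_irr u : base u u = false.
Proof.
apply/negbTE; rewrite /base; apply/negP.
case/or4P; first by case/andP=> /negbTE ->.
- case/andP=> /eqP -> ; by case/and3P.
- by case/and3P=> /eqP -> /and4P[].
case/or4P.
- by case/and3P=> /eqP -> /and3P[].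
- case/and4P=> /and4P[_ _ h _] _ _ /eqP; lia.
- case/and4P=> hu _ _ /eqP; have := t2_range hu; lia.
- by case/and5P=> _ _ _ _; rewrite eqxx.
Qed.

Lemma ess_irr S u : ess S u u = false.
Proof. apply/negbTE/negP; case/and5P=> h1 _ h2 _ _; exact: T12 h1 h2. Qed.

Lemma loopless_E S : loopless (E S).
Proof. by move=> x; rewrite inE /= base_irr ess_irr. Qed.

Lemma F_sub S b l v : b < B -> leaf k l -> leaf k v -> F b l v \subset E S.
Proof.
move=> hb hl hv; apply/subsetP => -[x y]; rewrite !inE /= => hf.
apply/orP; left; rewrite /base.
case/or3P: hf.
- case/andP=> /eqP -> /eqP ->.
  case/andP: hv => hv1 hv2.
  have hr : 0 < v < HH.
    rewrite HHE /LL; rewrite expnS in hv2; have := LL_pos; rewrite /LL; lia.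
  have h2 := isT2_v2 hb hr; case/andP: hr => _ hr.
  by rewrite h2 v2_t2 // hv1 /= !orbT.
- case/and5P=> h1 h2 /eqP h3 /eqP h4 /and3P[h5 _ _].
  by rewrite h1 h2 h3 h4 eqxx h5 /= !orbT.
- case/and5P=> h1 h2 /eqP h3 /eqP h4 /and3P[h5 _ _].
  by rewrite h1 h2 h3 h4 eqxx h5 /= !orbT.
Qed.


Lemma F_card b l v : leaf k l -> leaf k v -> #|F b l v| <= (2 * k).+1.
Proof.
move=> hl hv.
pose L := (0, v2 b v) ::
  [seq (v1 b (sib (l %/ 2^i) %/ 2), v1 b (sib (l %/ 2^i))) | i <- iota 0 k] ++
  [seq (v2 b (sib (v %/ 2^i)), v2 b (sib (v %/ 2^i) %/ 2)) | i <- iota 0 k].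
have -> : (2 * k).+1 = size L by rewrite /= size_cat !size_map size_iota; lia.
pose g (x : 'I_m.+1 * 'I_m.+1) := (nat_of_ord x.1, nat_of_ord x.2).
have ginj : injective g.
  by move=> [x1 x2] [y1 y2] [/val_inj -> /val_inj ->].
rewrite cardE -(size_map g); apply: uniq_leq_size.
  by rewrite map_inj_uniq // enum_uniq.
move=> y /mapP [[x1 x2]]; rewrite mem_enum inE /= => hf ->; rewrite /g /=.
rewrite inE mem_cat; case/or3P: hf.
- by case/andP=> /eqP -> /eqP ->; rewrite eqxx.
- case/and5P=> h1 h2 /eqP h3 /eqP h4 /and3P[/eqP h5 h6 h7].
  have hr : 0 < loc x2 < 2^k.+1 by case/and4P: h2 => _ _ -> ->.
  have h6' : anc k l (loc x2 %/ 2) by rewrite h5.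
  have [i hi hc] := tree_fault hl hr h6' h7.
  apply/orP; right; apply/orP; left; apply/mapP; exists i; first by rewrite mem_iota.
  by rewrite (isT1_E h1) (isT1_E h2) h3 h4 -h5 hc.
- case/and5P=> h1 h2 /eqP h3 /eqP h4 /and3P[/eqP h5 h6 h7].
  have hr := t2_range h1.
  have h6' : anc k v (t2 x1 %/ 2) by rewrite h5.
  have [i hi hc] := tree_fault hv hr h6' h7.
  apply/orP; right; apply/orP; right; apply/mapP; exists i; first by rewrite mem_iota.
  by rewrite (isT2_E h1) (isT2_E h2) h3 h4 -h5 hc.
Qed.


Section Neg.
Variables (S : pred nat) (b l v : nat).
Hypotheses (hb : b < B) (hl : leaf k l) (hv : leaf k v).

Definition Wp u := [&& isT2 u, blk u == b & anc k v (t2 u)] ||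
                   [&& isT1 u, blk u == b & ~~ anc k l (loc u)].

Lemma isT1_0 : isT1 0 = false. Proof. by []. Qed.
Lemma isT2_0 : isT2 0 = false. Proof. by []. Qed.

Lemma W_closed u w : ~~ S (idx3 b l v) -> Wp w -> base u w || ess S u w ->
  Wp u || fault b l v u w.
Proof.
move=> hS hW /orP hBE.
have av1 := anc_root hv; have al1 := anc_root hl.
case/orP: hW => /and3P [hw /eqP hbw ha].
-
  have nT1 : isT1 w = false by apply/negP => h; exact: T12 h hw.
  case: hBE; last first.
    rewrite /ess; case/and5P=> h1 h2 _ h4 /andP[/eqP h5 h6].
    have tv : t2 w = v := anc_leaf hv ha h4.
    case hal: (anc k l (loc u)).
      have lu : loc u = l := anc_leaf hl hal h2.
      by move: h6; rewrite lu h5 hbw tv (negbTE hS).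
    by apply/orP; left; apply/orP; right; rewrite h1 h5 hbw eqxx hal.
  rewrite /base; case/or4P.
  + by case/andP=> _ /eqP h; move: hw; rewrite h.
  + by case/andP=> _ /and3P[_ _]; rewrite hw.
  + by case/and3P=> _; rewrite nT1.
  case/or4P.
  + case/and3P=> /eqP hu _ hL.
    have tv : t2 w = v := anc_leaf hv ha hL.
    by rewrite /fault hu eqxx /= {1}(isT2_E hw) hbw tv eqxx.
  + by case/and4P=> _; rewrite nT1.
  + case/and4P=> h1 _ /eqP h3 /eqP h4.
    case hau: (anc k v (t2 u)).
      by apply/orP; left; apply/orP; left; rewrite h1 h3 hbw eqxx hau.
    by rewrite /fault h1 hw h3 hbw eqxx h4 eqxx ha hau /= !orbT.
  + case/and5P=> h1 /eqP h2 _ /eqP h4 _.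
    by apply/orP; left; apply/orP; left; rewrite h1 -h4 hbw eqxx h2 av1.
-
  have nT2 : isT2 w = false by apply/negP => h; exact: T12 hw h.
  case: hBE; last by rewrite /ess; case/and5P=> _ _; rewrite nT2.
  rewrite /base; case/or4P.
  + by case/andP=> _ /eqP h; move: hw; rewrite h.
  + by case/andP=> _ /and3P[_]; rewrite hw.
  + by case/and3P=> _ _ /eqP h; move: ha; rewrite h al1.
  case/or4P.
  + by case/and3P=> _; rewrite nT2.
  + case/and4P=> h1 _ /eqP h3 /eqP h4.
    case hau: (anc k l (loc u)).
      by rewrite /fault h1 hw h3 hbw eqxx h4 eqxx hau ha /= !orbT.
    by apply/orP; left; apply/orP; right; rewrite h1 h3 hbw eqxx hau.
  + by case/and4P=> _; rewrite nT2.
  + case/and5P=> h1 /eqP h2 _ /eqP h4 _.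
    by apply/orP; left; apply/orP; left; rewrite h1 -h4 hbw eqxx h2 av1.
Qed.

Lemma SC_neg : ~~ S (idx3 b l v) -> ~ strongly_connected (erel (E S :\: F b l v)).
Proof.
move=> hS hsc.
have [kk [p [hp hlast _]]] := hsc ord0 (inord (v2 b v)).
have hv' : 0 < v < HH.
  case/andP: hv => h1 h2; rewrite HHE /LL; rewrite expnS in h2; have := LL_pos; rewrite /LL; lia.
have key : forall (x : 'I_m.+1) q, ~~ Wp x -> path (erel (E S :\: F b l v)) x q ->
    ~~ Wp (last x q).
  move=> x q; elim: q x => [|y q IH] x //= hx /andP [hxy hq]; apply: IH hq.
  apply/negP => hy.
  move: hxy; rewrite /erel !inE /= => /andP [hf hbe].
  have := W_closed (u:=x) hS hy hbe; rewrite (negbTE hx) (negbTE hf) //.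
have := key ord0 p (erefl true) hp; rewrite hlast inordK; last first.
  by rewrite ltnS; apply: v2_le => //; case/andP: hv'.
apply/negP/negPn; apply/orP; left.
case/andP: hv' => h1 h2.
by rewrite (isT2_v2 hb) ?h1 ?h2 // v2_blk // v2_t2 // eqxx anc_refl.
Qed.
End Neg.


Section Pos.
Variables (S : pred nat) (b l v : nat).
Hypotheses (hb : b < B) (hl : leaf k l) (hv : leaf k v).
Let e := erel (E S :\: F b l v).

Lemma eE (u w : nat) : u <= m -> w <= m ->
  e (inord u) (inord w) = ~~ fault b l v u w && (base u w || ess S u w).
Proof. by move=> hu hw; rewrite /e /erel !inE /= !inordK. Qed.

Lemma leaf_range x : leaf k x -> 0 < x < HH.
Proof.
case/andP=> h1 h2; rewrite HHE /LL; rewrite expnS in h2; have := LL_pos; rewrite /LL; lia.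
Qed.

Lemma up_path b' x : b' < B -> leaf k x ->
  (forall j, j < k -> ~~ fault b l v (v2 b' (x %/ 2^j)) (v2 b' (x %/ 2^j.+1))) ->
  connect e (inord (v2 b' x)) (inord (v2 b' 1)).
Proof.
move=> hb' hx hf.
suff : forall i, i <= k -> connect e (inord (v2 b' x)) (inord (v2 b' (x %/ 2^i))).
  by move/(_ k (leqnn k)); rewrite root_div.
elim=> [|i IH] hi; first by rewrite expn0 divn1.
apply: connect_trans (IH (ltnW hi)) _; apply: connect1.
have r1 := path_node hx (ltnW hi); have r2 := path_node hx hi.
rewrite eE ?v2_le //; last by case/andP: r2.
  2: by case/andP: r1.
rewrite hf //= /base (isT2_v2 hb' r1) (isT2_v2 hb' r2).
rewrite !v2_blk ?v2_t2; try by [case/andP: r1 | case/andP: r2].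
by rewrite eqxx -div_succ eqxx /= ?orTb ?orbT.
Qed.

Lemma down_path b' x : b' < B -> leaf k x ->
  (forall j, j < k -> ~~ fault b l v (v1 b' (x %/ 2^j.+1)) (v1 b' (x %/ 2^j))) ->
  connect e (inord (v1 b' 1)) (inord (v1 b' x)).
Proof.
move=> hb' hx hf.
suff : forall i, i <= k -> connect e (inord (v1 b' (x %/ 2^i))) (inord (v1 b' x)).
  by move/(_ k (leqnn k)); rewrite root_div.
elim=> [|i IH] hi; first by rewrite expn0 divn1.
apply: connect_trans _ (IH (ltnW hi)); apply: connect1.
have r1 := path_node hx (ltnW hi); have r2 := path_node hx hi.
have p1 : x %/ 2^i < PP by rewrite PPE; case/andP: r1 => _; rewrite /HH expnS; lia.
have p2 : x %/ 2^i.+1 < PP by rewrite PPE; case/andP: r2 => _; rewrite /HH expnS; lia.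
rewrite eE ?v1_le //.
rewrite hf //= /base (isT1_v1 hb' r1) (isT1_v1 hb' r2).
by rewrite !v1_blk // !v1_loc // eqxx -div_succ eqxx /= ?orTb ?orbT.
Qed.


Lemma T1nT2 u : isT1 u -> isT2 u = false.
Proof. by move=> h; apply/negP => h'; exact: T12 h h'. Qed.
Lemma T2nT1 u : isT2 u -> isT1 u = false.
Proof. by move=> h; apply/negP => h'; exact: T12 h' h. Qed.

Lemma anc_div x j : j <= k -> anc k x (x %/ 2^j).
Proof. move=> hj; apply/existsP; exists (Ordinal (hj : j < k.+1)); by []. Qed.

Lemma root_reach b' : b' < B -> S (idx3 b l v) ->
  connect e (inord 0) (inord (v2 b' 1)).
Proof.
move=> hb' hS.
have hr1 : 0 < 1 < HH by rewrite HHE; have := LL_pos; lia.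
have hvr := leaf_range hv; have hlr := leaf_range hl.
have hlP : l < PP by rewrite PPE; case/andP: hlr => _; lia.
have T2v := isT2_v2 hb hvr.
case: (eqVneq b' b) => [->|hne].
- have T11 := isT1_v1 hb hr1.
  have e1 : e (inord 0) (inord (v1 b 1)).
    rewrite eE // ?v1_le //; last by rewrite PPE; lia.
    rewrite /fault /= orbF.
    apply/andP; split.
      apply/negP => /eqP h; move: T11; rewrite h; by rewrite (T2nT1 T2v).
    by rewrite /base T11 v1_loc ?eqxx ?orbT //; rewrite PPE; lia.
  apply: connect_trans (connect1 e1) _.
  apply: connect_trans (down_path hb hl _) _.
    move=> j hj; rewrite /fault /= !v1_loc; last first.
      + have := path_node hl (ltnW hj); rewrite PPE /HH expnS; lia.
      + have := path_node hl hj; rewrite PPE /HH expnS; lia.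
    rewrite negb_or; apply/andP; split; apply/negP.
      by case/and5P=> _ _ _ _ /and3P[_ _]; rewrite anc_div // ltnW.
    by case/and5P=> h _; rewrite (T1nT2 (isT1_v1 hb (path_node hl hj))) in h.
  apply: (connect_trans (y := inord (v2 b v))); last first.
    apply: up_path => // j hj; rewrite /fault /= negb_or; apply/andP; split; apply/negP.
      by case/and5P=> h _; rewrite (T2nT1 (isT2_v2 hb (path_node hv (ltnW hj)))) in h.
    case/and5P=> _ _ _ _ /and3P[_ _]; rewrite v2_t2; last by case/andP: (path_node hv (ltnW hj)).
    by rewrite anc_div // ltnW.
  apply: connect1; rewrite eE ?v1_le ?v2_le //; last by case/andP: hvr.
  have T1l := isT1_v1 hb hlr.
  rewrite /fault /= (T2nT1 T2v) (T1nT2 T1l) /= !andbF /=.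
  rewrite /base /ess T1l T2v v1_loc // v2_t2 ?v1_blk ?v2_blk //; try by case/andP: hvr.
  case/andP: hl => -> _; case/andP: hv => -> _; rewrite eqxx hS.
  by rewrite ?orbT.
- have hLr := leaf_range (leaf_LL k).
  have T2L := isT2_v2 hb' hLr.
  have e1 : e (inord 0) (inord (v2 b' LL)).
    rewrite eE // ?v2_le //; last by case/andP: hLr.
    rewrite /fault /= orbF.
    apply/andP; split.
      apply/negP => /eqP h; move: hne; rewrite -(v2_blk b' (_ : LL < HH)); last by case/andP: hLr.
      by rewrite h v2_blk ?eqxx //; case/andP: hvr.
    by rewrite /base T2L v2_t2 ?leqnn ?orbT //; case/andP: hLr.
  apply: connect_trans (connect1 e1) _.
  apply: up_path => //; first exact: leaf_LL.
  move=> j hj; rewrite /fault /= negb_or; apply/andP; split; apply/negP.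
    by case/and5P=> h _; rewrite (T2nT1 (isT2_v2 hb' (path_node (leaf_LL k) (ltnW hj)))) in h.
  case/and5P=> _ _; rewrite v2_blk; last by case/andP: (path_node (leaf_LL k) (ltnW hj)).
  by rewrite (negbTE hne).
Qed.

Lemma SC_pos : S (idx3 b l v) -> strongly_connected (erel (E S :\: F b l v)).
Proof.
move=> hS.
have hm : 0 <= m by [].
suff hub : forall x : 'I_m.+1, connect e x (inord 0) /\ connect e (inord 0) x.
  move=> s t; have := connect_trans (hub s).1 (hub t).2.
  case/connectP => p hp ht; exists (size p), p; split => //; by rewrite ht.
move=> x; rewrite -(inord_val x); have hx : (x : nat) <= m by rewrite -ltnS.
move: (x : nat) hx => u hu {x}.
case: (posnP u) => [->|u0]; first by split.
split.
  apply: connect1; rewrite eE //= /fault /=.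
  have u0' : (u == 0) = false by rewrite eqn0Ngt u0.
  by rewrite u0' !andbF /= /base u0'.
case hT: (isT1 u || isT2 u).
- have hb' : blk u < B by case/orP: hT => [/and4P[]|/and3P[]].
  have hr1 : 0 < 1 < HH by rewrite HHE; have := LL_pos; lia.
  have hroot := root_reach hb' hS.
  case: (eqVneq u (v2 (blk u) 1)) => [hE|hne]; first by rewrite hE.
  have T2r := isT2_v2 hb' hr1.
  apply: (connect_trans hroot); apply: connect1; rewrite eE ?v2_le //.
  rewrite /fault /= negb_or; apply/andP; split; first (apply/andP; split).
  + by rewrite (T2nT1 T2r).
  + apply/negP; case/and5P=> _ h2 _ _ /and3P[]; rewrite v2_t2 //.
    by have := t2_range h2; case/andP => /lt0n_neq0 /negbTE; rewrite eq_sym => ->.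
  + rewrite /base T2r v2_t2 // eqxx hT v2_blk // eqxx (eq_sym _ u) hne /= !orbT.
    done.
- apply: connect1; rewrite eE // /fault /= orbF; apply/andP; split.
    have hvr := leaf_range hv.
    apply/negP => /eqP h; move: hT; rewrite h (isT2_v2 hb hvr); by rewrite orbT.
  move/negbT: hT; rewrite negb_or => /andP [h1 h2].
  by rewrite /base /extra u0 h1 h2 ?orbT.
Qed.

End Pos.

End Graph.

Lemma pigeon (T : finType) (phi : T -> seq bool) L :
  injective phi -> (forall x, size (phi x) <= L) -> #|T| <= 3 ^ L.
Proof.
move=> hinj hL.
pose g x : {ffun 'I_L -> option bool} := [ffun i : 'I_L => nth None (map Some (phi x)) i].
suff ginj : injective g.
  by have := leq_card g ginj; rewrite card_ffun card_option card_bool card_ord.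
move=> x y hxy; apply: hinj.
have hn : forall i, nth None (map Some (phi x)) i = nth None (map Some (phi y)) i.
  move=> i; case: (ltnP i L) => hi.
    by have := congr1 (fun h : {ffun 'I_L -> option bool} => h (Ordinal hi)) hxy; rewrite /g !ffunE.
  by rewrite !nth_default ?size_map //; apply: leq_trans hi.
have hs : size (phi x) = size (phi y).
  apply/eqP; rewrite eqn_leq; apply/andP; split; rewrite leqNgt; apply/negP => h.
    have := hn (size (phi y)); rewrite (nth_map false _ _ h) (@nth_default _ None (map Some (phi y))) ?size_map //.
  have := hn (size (phi x)); rewrite (nth_map false _ _ h) (@nth_default _ None (map Some (phi x))) ?size_map //.
apply: (inj_map (@Some_inj _)); apply: (@eq_from_nth _ None); first by rewrite !size_map.
by move=> i _; apply: hn.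
Qed.

Lemma bits_lower m k B f (R : realFieldType) (sigma : R)
  (enc : edgeset m.+1 -> seq bool) (q : seq bool -> edgeset m.+1 -> option R) :
  B * 2^k.+2 <= m -> (2*k).+1 <= f -> is_FDO f sigma enc q ->
  exists E : edgeset m.+1, loopless E /\ B * (2^k * 2^k) <= 2 * size (enc E).
Proof.
move=> hBP hf hFDO; set M := B * (2^k * 2^k).
pose pr (S : {set 'I_M}) : pred nat := fun i => [exists j in S, nat_of_ord j == i].
pose Phi S := enc (E m k B (pr S)).
have hLL : 0 < 2^k by rewrite expn_gt0.
have dist : forall (S1 S2 : {set 'I_M}) (j : 'I_M), j \in S1 -> j \notin S2 -> Phi S1 <> Phi S2.
  move=> S1 S2 j h1 h2 heq.
  have hj : j < B * (2^k * 2^k) := ltn_ord j.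
  set r := j %% (2^k * 2^k).
  have hb : j %/ (2^k * 2^k) < B by rewrite ltn_divLR ?muln_gt0 ?hLL.
  have hr : r < 2^k * 2^k by rewrite ltn_mod muln_gt0 hLL.
  have hrd : r %/ 2^k < 2^k by rewrite ltn_divLR.
  have hrm : r %% 2^k < 2^k by rewrite ltn_mod.
  have hl : leaf k (2^k + r %/ 2^k).
    by rewrite /leaf leq_addr expnS mul2n -addnn ltn_add2l.
  have hv : leaf k (2^k + r %% 2^k).
    by rewrite /leaf leq_addr expnS mul2n -addnn ltn_add2l.
  have hid : idx3 k (j %/ (2^k * 2^k)) (2^k + r %/ 2^k) (2^k + r %% 2^k) = j.
    rewrite /idx3 /LL !addKn -addnA -divn_eq /r; by rewrite -divn_eq.
  have p1 : pr S1 (idx3 k (j %/ (2^k * 2^k)) (2^k + r %/ 2^k) (2^k + r %% 2^k)).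
    by rewrite hid; apply/existsP; exists j; rewrite h1 eqxx.
  have p2 : ~~ pr S2 (idx3 k (j %/ (2^k * 2^k)) (2^k + r %/ 2^k) (2^k + r %% 2^k)).
    rewrite hid; apply/existsP => -[j' /andP [hj' /eqP e]].
    by move: h2; rewrite -(val_inj e) hj'.
  have hFc := leq_trans (F_card hBP (j %/ (2^k * 2^k)) hl hv) hf.
  have hF1 := hFDO _ (loopless_E hBP (pr S1)) _ (F_sub hBP _ hb hl hv) hFc.
  have hF2 := hFDO _ (loopless_E hBP (pr S2)) _ (F_sub hBP _ hb hl hv) hFc.
  case: hF1 => _ /(_ (SC_pos hBP hb hl hv p1)) [x [hx _]].
  case: hF2 => /(_ (SC_neg hBP hb hl hv p2)) hn _.
  by move: hx; rewrite /Phi in heq; rewrite heq hn.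
have inj : injective Phi.
  move=> S1 S2 heq; apply/setP => j; case h1: (j \in S1); case h2: (j \in S2) => //.
  - by exfalso; apply: (dist S1 S2 j) heq; rewrite ?h1 ?h2.
  - by exfalso; apply: (dist S2 S1 j) (esym heq); rewrite ?h1 ?h2.
case: (boolP [exists S, M <= 2 * size (Phi S)]).
  case/existsP => S hS; exists (E m k B (pr S)); split; [exact: loopless_E | exact hS].
rewrite negb_exists => /forallP hall; exfalso.
have hsz : forall S, size (Phi S) <= (M.-1) %/ 2.
  by move=> S; have := hall S; rewrite -ltnNge => h; lia.
have hM : 0 < M by have := hall set0; rewrite -ltnNge; lia.
have := pigeon inj hsz.
have := max_card (mem (powerset [set: 'I_M])).
rewrite card_powerset cardsT card_ord => h1 h2.
have h3 := leq_trans h1 h2.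
have h4 : 3 ^ ((M.-1) %/ 2) <= 2 ^ (2 * ((M.-1) %/ 2)).
  rewrite expnM; case: ((M.-1) %/ 2) => [|L] //; by rewrite leq_exp2r.
have := leq_trans h3 h4; rewrite leq_exp2l //; lia.
Qed.

Local Open Scope ring_scope.

Lemma choose_k (k0 n : nat) : (8 <= n)%N ->
  exists k, [/\ (k <= k0)%N, (2^k.+3 <= n)%N & (k = k0 \/ (n < 2^k.+4)%N)].
Proof.
move=> hn; elim: k0 => [|k0 [k [h1 h2 h3]]].
- by exists 0%N; split => //; left.
case: h3 => [hk|h3].
- subst k; case: (leqP (2^k0.+4) n) => h.
    by exists k0.+1; split => //; left.
  by exists k0; split => //; right.
- by exists k; split => //; [apply: leqW | right].
Qed.

Section Arith.
Variable R : realFieldType.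

Lemma sq_le (a b : R) : 0 <= a -> a <= b -> a ^+ 2 <= b ^+ 2.
Proof. move=> ha hab; rewrite !expr2 ler_pM //. Qed.

Lemma c_pos (C : R) : 0 < C -> 0 < (64 + 512 * C)^-1.
Proof. move=> h; rewrite invr_gt0; lra. Qed.

Lemma arith (C x nn ss P : R) :
  0 < C -> 0 <= x -> 0 <= nn -> 0 <= ss -> 0 <= P -> nn * x <= 32 * ss ->
  (P <= 4 * (x * x) \/ (nn <= 16 * x /\ P <= C ^+ 2 * nn ^+ 2)) ->
  (64 + 512 * C)^-1 ^+ 2 * P * nn ^+ 2 <= ss ^+ 2.
Proof.
move=> C0 x0 n0 s0 P0 hF1 hcase.
have d0 : 0 < 64 + 512 * C by lra.
set c := (64 + 512 * C)^-1.
have hc0 : 0 <= c by rewrite invr_ge0 ltW.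
have hcm : c * (64 + 512 * C) = 1 by rewrite mulVf // gt_eqF.
have hcC : 0 <= c * C by rewrite mulr_ge0 // ltW.
have hcm' : 64 * c + 512 * (c * C) = 1.
  by rewrite -[RHS]hcm; ring.
move: hcC hcm'; set t := c * C => hcC hcm'.
have hc1 : 64 * c <= 1 by lra.
have hc2 : 512 * t <= 1 by lra.
have hF1' : (nn * x) ^+ 2 <= (32 * ss) ^+ 2 by apply: sq_le => //; rewrite mulr_ge0.
case: hcase => [hA|[hB' hP]].
- apply: (le_trans (y := c ^+ 2 * (4 * (x * x)) * nn ^+ 2)).
    by rewrite ler_wpM2r ?exprn_ge0 // ler_wpM2l ?exprn_ge0.
  have -> : c ^+ 2 * (4 * (x * x)) * nn ^+ 2 = 4 * c ^+ 2 * (nn * x) ^+ 2 by ring.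
  apply: (le_trans (y := 4 * c ^+ 2 * (32 * ss) ^+ 2)).
    by rewrite ler_wpM2l // mulr_ge0 ?exprn_ge0 //; lra.
  have -> : 4 * c ^+ 2 * (32 * ss) ^+ 2 = (64 * c) ^+ 2 * ss ^+ 2 by ring.
  rewrite -[X in _ <= X]mul1r ler_wpM2r ?exprn_ge0 //.
  by rewrite exprn_ile1 // mulr_ge0 //; lra.
- have hB2 : nn ^+ 2 <= (16 * x) ^+ 2 by apply: sq_le.
  apply: (le_trans (y := c ^+ 2 * (C ^+ 2 * nn ^+ 2) * nn ^+ 2)).
    by rewrite ler_wpM2r ?exprn_ge0 // ler_wpM2l ?exprn_ge0.
  apply: (le_trans (y := c ^+ 2 * (C ^+ 2 * (16 * x) ^+ 2) * nn ^+ 2)).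
    rewrite ler_wpM2r ?exprn_ge0 // ler_wpM2l ?exprn_ge0 //; apply: ler_wpM2l => //; exact: sqr_ge0.
  have -> : c ^+ 2 * (C ^+ 2 * (16 * x) ^+ 2) * nn ^+ 2 =
            256 * t ^+ 2 * (nn * x) ^+ 2 by rewrite /t; ring.
  apply: (le_trans (y := 256 * t ^+ 2 * (32 * ss) ^+ 2)).
    by rewrite ler_wpM2l // mulr_ge0 ?exprn_ge0 //; lra.
  have -> : 256 * t ^+ 2 * (32 * ss) ^+ 2 = (512 * t) ^+ 2 * ss ^+ 2 by ring.
  rewrite -[X in _ <= X]mul1r ler_wpM2r ?exprn_ge0 //.
  by rewrite exprn_ile1 // mulr_ge0 //; lra.
Qed.
End Arith.

Theorem theorem4 :
  forall C : rat, 0 < C ->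
  exists c : rat, 0 < c /\
  exists N : nat, forall n f : nat, (N <= n)%N -> (0 < f)%N ->
    (2 ^ f)%:R <= C ^+ 2 * (n ^ 2)%:R ->
    forall (R : realFieldType) (sigma : R)
           (enc : edgeset n -> seq bool) (q : seq bool -> edgeset n -> option R),
      1 <= sigma -> is_FDO f sigma enc q ->
      exists E : edgeset n, loopless E /\
        c ^+ 2 * (2 ^ f)%:R * (n ^ 2)%:R <= ((size (enc E)) ^ 2)%:R.
Proof.
move=> C C0.
exists (64 + 512 * C)^-1; split; first exact: c_pos.
exists 8%N => n f hn hf hP R sigma enc q _ hFDO.
case: n hn hP enc q hFDO => [//|m] hn hP enc q hFDO.
have [k [hk1 hk2 hk3]] := choose_k ((f.-1) %/ 2) hn.
set B := (m.+1 %/ 2^k.+3)%N.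
have hX : (0 < 2^k)%N by rewrite expn_gt0.
have hBd : (B * 2^k.+3 <= m.+1)%N by apply: leq_trunc_div.
have hB1 : (1 <= B)%N by rewrite /B leq_divRL ?expn_gt0 // mul1n.
have hBP : (B * 2^k.+2 <= m)%N by move: hBd; rewrite (expnS 2 k.+2); lia.
have hfk : ((2 * k).+1 <= f)%N by lia.
have [E [hE hsz]] := bits_lower hBP hfk hFDO.
exists E; split; first exact: hE.
set s := size (enc E).
have hlt : (m.+1 < B.+1 * 2^k.+3)%N by rewrite /B ltn_ceil // expn_gt0.
have F1 : (m.+1 * 2^k <= 32 * s)%N.
  move: hlt hsz; rewrite (expnS 2 k.+2) (expnS 2 k.+1) (expnS 2 k); set X := (2^k)%N; move=> hlt hsz.
  have h1 : (m.+1 <= 16 * B * X)%N.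
    have h0 : (B.+1 * (2*(2*(2*X))) <= (2*B) * (2*(2*(2*X))))%N.
      by rewrite leq_mul2r; apply/orP; right; lia.
    have -> : (16 * B * X = (2*B) * (2*(2*(2*X))))%N by ring.
    exact: leq_trans (ltnW hlt) h0.
  have h2 : (m.+1 * X <= 16 * B * X * X)%N by rewrite leq_mul2r h1 orbT.
  apply: leq_trans h2 _.
  have -> : (16 * B * X * X = 16 * (B * (X * X)))%N by rewrite !mulnA.
  have -> : (32 * s = 16 * (2 * s))%N by rewrite mulnA.
  by rewrite leq_mul2l hsz orbT.
have hF1 : (m.+1)%:R * (2 ^ k)%:R <= 32 * (s%:R) :> rat.
  by rewrite -natrM -(natrM _ 32 s) ler_nat.
have hcase : ((2 ^ f)%:R <= 4 * ((2 ^ k)%:R * (2 ^ k)%:R) :> rat) \/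
    ((m.+1)%:R <= 16 * (2 ^ k)%:R :> rat /\ (2 ^ f)%:R <= C ^+ 2 * (m.+1)%:R ^+ 2 :> rat).
  case: hk3 => [hk|hk]; [left | right].
    rewrite -natrM -(natrM _ 4) ler_nat -expnD.
    rewrite (_ : 4 = 2 ^ 2)%N // -expnD leq_exp2l //; lia.
  split; last by move: hP; rewrite [(m.+1 ^ 2)%:R]natrX.
  by rewrite -(natrM _ 16) ler_nat; rewrite (expnS 2 k.+3) (expnS 2 k.+2) (expnS 2 k.+1) (expnS 2 k) in hk; lia.
rewrite [(m.+1 ^ 2)%:R]natrX [(s ^ 2)%:R]natrX.
exact: (@arith rat C _ _ _ _ C0 (ler0n _ _) (ler0n _ _) (ler0n _ _) (ler0n _ _) hF1 hcase).
Qed.
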